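(* The 1s frequency of $\mathcal{W}^1_n$ and the 1s frequency of $\mathcal{B}_n(11)$ both tend to $\frac{2-\varphi}{3-\varphi}$ as $n\to\infty$, where $\varphi=\frac{1+\sqrt5}{2}$.
   Context: A binary word is $1$-decreasing if for every maximal run of $0$s, of length $a>0$, together with the (possibly empty) maximal run of $1$s immediately following it, of length $b$, one has $a>b$; $\mathcal{W}^1_n$ is the set of $1$-decreasing words of length $n$. $\mathcal{B}_n(11)$ is the set of binary words of length $n$ with no two consecutive $1$s. The 1s frequency of a finite set of binary words is the total number of occurrences of $1$ in all words of the set divided by the total number of letters in all words of the set. *)

(* Defs.v *)
From HB Require Import structures.
From mathcomp Require Import all_boot all_order all_algebra.
From mathcomp Require Import reals topology normedtype sequences.
Set Implicit Arguments. Unset Strict Implicit. Unset Printing Implicit Defensive.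
Import Order.TTheory GRing.Theory Num.Theory.
Local Open Scope ring_scope.

(* Binary words are sequences of booleans: false = letter 0, true = letter 1. *)

Fixpoint rle (s : seq bool) : seq (bool * nat) :=
  match s with
  | [::] => [::]
  | x :: s' =>
      match rle s' with
      | (y, k) :: r => if x == y then (y, k.+1) :: r else (x, 1%N) :: (y, k) :: r
      | [::] => [:: (x, 1%N)]
      end
  end.

(* For every maximal run of 0s of length a, followed by the (possibly empty)
   maximal run of 1s of length b, we have a > b. If the 0-run is not followed by
   a 1-run, then b = 0 and a > 0 holds trivially. *)
Fixpoint runs_1dec (r : seq (bool * nat)) : bool :=
  match r with
  | [::] => true
  | (false, a) :: (((true, b) :: _) as r') => ((b < a)%N) && runs_1dec r'
  | _ :: r' => runs_1dec r'
  end.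

Definition one_decreasing (w : seq bool) : bool := runs_1dec (rle w).

Definition no11 (w : seq bool) : bool := ~~ infix [:: true; true] w.

Definition ones_freq (R : realType) (P : seq bool -> bool) (n : nat) : R :=
  ((\sum_(w : n.-tuple bool | P w) count_mem true w)%N)%:R
  / ((\sum_(w : n.-tuple bool | P w) n)%N)%:R.

Definition golden (R : realType) : R := (1 + Num.sqrt 5) / 2.

(* Main.v *)
Require Import Defs.
From HB Require Import structures.
From mathcomp Require Import all_boot all_order all_algebra.
From mathcomp Require Import reals topology normedtype sequences.
From mathcomp Require Import zify lra ring.

Module Comb.
Set Implicit Arguments. Unset Strict Implicit. Unset Printing Implicit Defensive.
Fixpoint words (n : nat) : seq (seq bool) :=
  if n is n'.+1 then [seq false :: s | s <- words n'] ++ [seq true :: s | s <- words n']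
  else [:: [::]].

Lemma mem_words n s : (s \in words n) = (size s == n).
Proof.
elim: n s => [|n IH] s; first by case: s.
case: s => [|x s] /=; rewrite mem_cat.
  by apply/negbTE/norP; split; apply/mapP => -[].
rewrite eqSS -IH; case: x.
  apply/orP/idP => [[/mapP [t _ //]|/mapP [t Ht [->]]] //|H]; right; exact: map_f.
apply/orP/idP => [[/mapP [t Ht [->]]|/mapP [t _ //]] //|H]; left; exact: map_f.
Qed.

Lemma uniq_words n : uniq (words n).
Proof.
elim: n => //= n IH; rewrite cat_uniq !map_inj_uniq //=; last by move=> x y [].
rewrite IH /= andbT; apply/hasPn => s /mapP [t _ ->]; apply/mapP => -[u _ //].
by move=> x y [].
Qed.

Lemma sum_tuple n (P : pred (seq bool)) (F : seq bool -> nat) :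
  (\sum_(w : n.-tuple bool | P w) F w = \sum_(s <- words n | P s) F s)%N.
Proof.
rewrite -(big_map val P F).
apply: perm_big; apply: uniq_perm.
- rewrite map_inj_uniq ?index_enum_uniq //; exact: val_inj.
- exact: uniq_words.
move=> s; rewrite mem_words; apply/mapP/idP => [[t _ ->]|H]; first by rewrite size_tuple.
by exists (Tuple H); rewrite ?mem_index_enum.
Qed.

Lemma sum_words_S n (P : pred (seq bool)) (F : seq bool -> nat) :
  (\sum_(s <- words n.+1 | P s) F s =
   \sum_(s <- words n | P (false :: s)) F (false :: s) +
   \sum_(s <- words n | P (true :: s)) F (true :: s))%N.
Proof. by rewrite /= big_cat !big_map. Qed.

Lemma sum_words_inv n (tau : seq bool -> seq bool) (F : seq bool -> nat) :
  involutive tau -> (forall s, size (tau s) = size s) ->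
  (\sum_(s <- words n) F s = \sum_(s <- words n) F (tau s))%N.
Proof.
move=> Hi Hs; rewrite -(big_map tau predT F); apply: perm_big; apply: uniq_perm.
- exact: uniq_words.
- rewrite map_inj_uniq ?uniq_words //; exact: inv_inj.
move=> s; rewrite mem_words; apply/idP/mapP => [H|[t Ht ->]].
  by exists (tau s); rewrite ?Hi // mem_words Hs.
by rewrite Hs -mem_words.
Qed.
Fixpoint lz (s : seq bool) : nat := if s is false :: s' then (lz s').+1 else 0.
Fixpoint lo (s : seq bool) : nat := if s is true :: s' then (lo s').+1 else 0.

Lemma rle_head x s : exists k r, rle (x :: s) = (x, k.+1) :: r.
Proof.
rewrite /=; case: (rle s) => [|[y k] r].
  exists 0. exists nil. by [].
case: eqP => [->|_].
  exists k. exists r. by [].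
exists 0. exists ((y, k) :: r). by [].
Qed.

Lemma rle_nseq x a u : head (~~ x) u = ~~ x -> 0 < a ->
  rle (nseq a x ++ u) = (x, a) :: rle u.
Proof.
move=> Hu.
have H1 : rle (x :: u) = (x, 1) :: rle u.
  move: Hu; case: u => [|y u] //= Hy.
  have [k [r Hr]] := rle_head y u.
  rewrite /= in Hr; rewrite Hr; subst y; by case: x Hr.
elim: a => // -[|a] IH _ //.
by rewrite /= in IH; rewrite /= IH // eqxx.
Qed.

Lemma drop_nseq_cat (x : bool) a u : drop a (nseq a x ++ u) = u.
Proof. by elim: a => [|a IH] /=; rewrite ?drop0. Qed.

Lemma lz_cat a u : lz (nseq a false ++ u) = a + lz u.
Proof. by elim: a => //= a ->. Qed.
Lemma lo_cat b u : lo (nseq b true ++ u) = b + lo u.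
Proof. by elim: b => //= b ->. Qed.

Lemma lz_split s : s = nseq (lz s) false ++ drop (lz s) s.
Proof. by elim: s => // -[] s IH //=; rewrite -IH. Qed.
Lemma lo_split s : s = nseq (lo s) true ++ drop (lo s) s.
Proof. by elim: s => // -[] s IH //=; rewrite -IH. Qed.
Lemma lz_head s : head true (drop (lz s) s) = true.
Proof. by elim: s => // -[] s IH. Qed.
Lemma lo_head s : head false (drop (lo s) s) = false.
Proof. by elim: s => // -[] s IH. Qed.

Definition dR s := drop (lz s) s.
Definition dB s := lo (dR s).
Definition dT s := drop (dB s) (dR s).

Lemma decompP s :
  [/\ s = nseq (lz s) false ++ nseq (dB s) true ++ dT s,
      head false (dT s) = false & (0 < dB s) || (dT s == [::])].
Proof.
split; first by rewrite /dT /dB -lo_split /dR -lz_split.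
  exact: lo_head.
rewrite /dT /dB; have := lo_head (dR s); case: (lo (dR s)) => // H.
rewrite drop0 in H *; have := lz_head s; rewrite -/(dR s).
by move: H; case: (dR s) => // -[].
Qed.

Lemma lo0 t : head false t = false -> lo t = 0.
Proof. by case: t => // -[]. Qed.

Lemma decomp_nseq a b t : head false t = false -> (0 < b) || (t == [::]) ->
  [/\ lz (nseq a false ++ nseq b true ++ t) = a,
      dB (nseq a false ++ nseq b true ++ t) = b &
      dT (nseq a false ++ nseq b true ++ t) = t].
Proof.
move=> Ht Hb.
have Hz : lz (nseq a false ++ nseq b true ++ t) = a.
  rewrite lz_cat; case: b Hb => [/eqP -> /=|b _ /=]; by rewrite addn0.
have HB : dB (nseq a false ++ nseq b true ++ t) = b.
  by rewrite /dB /dR Hz drop_nseq_cat lo_cat lo0 // addn0.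
split => //; by rewrite /dT HB /dR Hz !drop_nseq_cat.
Qed.

Lemma od_block a b t : head false t = false -> (0 < b) || (t == [::]) ->
  one_decreasing (nseq a false ++ nseq b true ++ t) =
  ((a == 0) || (b < a)) && one_decreasing t.
Proof.
move=> Ht; case: b => [/eqP -> | b _].
  case: a => // a.
  have -> : nseq a.+1 false ++ nseq 0 true ++ [::] = nseq a.+1 false ++ [::] by [].
  by rewrite /one_decreasing rle_nseq.
have Hb : rle (nseq b.+1 true ++ t) = (true, b.+1) :: rle t by rewrite rle_nseq.
case: a => [|a].
  have -> : nseq 0 false ++ nseq b.+1 true ++ t = nseq b.+1 true ++ t by [].
  by rewrite /one_decreasing Hb.
rewrite /one_decreasing (@rle_nseq false a.+1 (nseq b.+1 true ++ t)) // Hb.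
by [].
Qed.

Definition sig (a b : nat) : nat * nat :=
  if (a == 0) && (1 < b) then (b./2, b - b./2)
  else if (0 < a) && ((b == a) || (b == a.+1)) then (0, a + b)
  else (a, b).

Lemma halfP b : b = odd b + b./2 + b./2.
Proof. by rewrite -addnA addnn odd_double_half. Qed.

Variant sig_spec a b : nat * nat -> Type :=
  | SigA of (a == 0) && (1 < b) : sig_spec a b (b./2, b - b./2)
  | SigB of ~~ ((a == 0) && (1 < b)) & (0 < a) && ((b == a) || (b == a.+1)) :
      sig_spec a b (0, a + b)
  | SigC of ~~ ((a == 0) && (1 < b)) & ~~ ((0 < a) && ((b == a) || (b == a.+1))) :
      sig_spec a b (a, b).

Lemma sigP a b : sig_spec a b (sig a b).
Proof.
rewrite /sig; case: ifP => H1; first exact: SigA.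
case: ifP => H2; [apply: SigB | apply: SigC]; by rewrite ?H1 ?H2.
Qed.

Ltac sigtac a b := have := halfP b; have := halfP (a + b);
  case: (odd b) => /= E1; case: (odd (a + b)) => /= E2;
  case: (sigP a b) => /= H1; try move=> H2; rewrite /sig /=;
  repeat (case: ifP => /= ?); try (f_equal; lia); try lia.

Lemma sigK a b : sig (sig a b).1 (sig a b).2 = (a, b).
Proof. sigtac a b. Qed.

Lemma sig_sum a b : (sig a b).1 + (sig a b).2 = a + b.
Proof. sigtac a b. Qed.

Lemma sig_b0 a b : (sig a b).2 = 0 -> b = 0.
Proof. sigtac a b. Qed.

Lemma sig_od a b : ((sig a b).2 < (sig a b).1.+2) = ((a == 0) || (b < a)).
Proof. sigtac a b. Qed.

Lemma sig_ones a b : (a == 0) || (b < a) ->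
  (sig a b).2 + (if a == 0 then b else 0)./2 = b.
Proof. sigtac a b. Qed.

Definition tau s := nseq (sig (lz s) (dB s)).1 false ++ nseq (sig (lz s) (dB s)).2 true ++ dT s.

Lemma sig_canon a b (t : seq bool) : (0 < b) || (t == [::]) ->
  (0 < (sig a b).2) || (t == [::]).
Proof.
case/orP => [Hb|->]; last by rewrite orbT.
apply/orP; left; rewrite lt0n; apply/eqP => /sig_b0 H; by rewrite H in Hb.
Qed.

Lemma tau_nseq a b t : head false t = false -> (0 < b) || (t == [::]) ->
  tau (nseq a false ++ nseq b true ++ t) =
  nseq (sig a b).1 false ++ nseq (sig a b).2 true ++ t.
Proof. by move=> Ht Hb; rewrite /tau; have [-> -> ->] := decomp_nseq a Ht Hb. Qed.

Lemma decomp_ind (P : seq bool -> Prop) :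
  (forall a b t, head false t = false -> (0 < b) || (t == [::]) ->
     P (nseq a false ++ nseq b true ++ t)) -> forall s, P s.
Proof. move=> H s; have [Hs Ht Hb] := decompP s; rewrite Hs; exact: H. Qed.

Lemma tauK : involutive tau.
Proof.
elim/decomp_ind => a b t Ht Hb.
by rewrite tau_nseq // tau_nseq ?sig_canon // sigK.
Qed.

Lemma size_tau s : size (tau s) = size s.
Proof.
elim/decomp_ind: s => a b t Ht Hb; rewrite tau_nseq //.
by rewrite !size_cat !size_nseq !addnA sig_sum.
Qed.

Lemma od_ff_tau s : one_decreasing (false :: false :: tau s) = one_decreasing s.
Proof.
elim/decomp_ind: s => a b t Ht Hb; rewrite tau_nseq //.
have -> : forall n u, false :: false :: (nseq n false ++ u) = nseq n.+2 false ++ u by [].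
by rewrite od_block ?sig_canon // od_block //= sig_od.
Qed.

Lemma count_nseq3 a b t :
  count_mem true (nseq a false ++ nseq b true ++ t) = b + count_mem true t.
Proof. by elim: a => //=; elim: b => //= b ->. Qed.

Lemma lo_nseq3 a b t : head false t = false ->
  lo (nseq a false ++ nseq b true ++ t) = if a == 0 then b else 0.
Proof. move=> Ht; case: a => //=; by rewrite lo_cat lo0 // addn0. Qed.

Lemma ones_tau s : one_decreasing s ->
  count_mem true (tau s) + (lo s)./2 = count_mem true s.
Proof.
elim/decomp_ind: s => a b t Ht Hb; rewrite tau_nseq // => H.
rewrite od_block // in H; case/andP: H => H _.
by rewrite !count_nseq3 lo_nseq3 // addnAC sig_ones.
Qed.

Lemma od_true s : one_decreasing (true :: s) = one_decreasing s.
Proof.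
elim/decomp_ind: s => a b t Ht Hb; case: a => [|a].
  have -> : true :: (nseq 0 false ++ nseq b true ++ t) =
            nseq 0 false ++ nseq b.+1 true ++ t by [].
  by rewrite !od_block.
set X := nseq a.+1 false ++ _.
have -> : true :: X = nseq 0 false ++ nseq 1 true ++ X by [].
by rewrite od_block.
Qed.

Lemma od_ft s : one_decreasing (false :: true :: s) = false.
Proof.
have [Hs Ht Hb] := decompP (true :: s).
have -> : false :: true :: s = nseq 1 false ++ nseq (dB (true :: s)) true ++ dT (true :: s).
  by rewrite {1}Hs.
by rewrite od_block //=.
Qed.

Lemma no11_f s : no11 (false :: s) = no11 s.
Proof. by rewrite /no11 infix_consl !prefix_cons. Qed.
Lemma no11_tf s : no11 (true :: false :: s) = no11 s.
Proof. by rewrite /no11 !infix_consl. Qed.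
Lemma no11_tt s : no11 (true :: true :: s) = false.
Proof. by rewrite /no11 infix_consl !prefix_cons prefix0s. Qed.

Definition cnt (P : pred (seq bool)) n := (\sum_(s <- words n | P s) 1)%N.
Definition ones (P : pred (seq bool)) n := (\sum_(s <- words n | P s) count_mem true s)%N.
Definition HH n := (\sum_(s <- words n | one_decreasing s) (lo s)./2)%N.

Lemma sum_ff_tau n (G : seq bool -> nat) :
  (\sum_(s <- words n | one_decreasing (false :: false :: s)) G s =
   \sum_(s <- words n | one_decreasing s) G (tau s))%N.
Proof.
rewrite !big_mkcond (@sum_words_inv n tau (fun s => if one_decreasing (false :: false :: s) then G s else 0) tauK size_tau).
rewrite [RHS]big_mkcond; by apply: eq_bigr => s _; rewrite od_ff_tau.
Qed.

Lemma sum0_ft n (G : seq bool -> nat) :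
  (\sum_(s <- words n | one_decreasing (false :: true :: s)) G s = 0)%N.
Proof. by rewrite big_pred0 // => s; rewrite od_ft. Qed.

Lemma cntA_rec n : cnt one_decreasing n.+2 = cnt one_decreasing n.+1 + cnt one_decreasing n.
Proof.
rewrite /cnt sum_words_S sum_words_S sum0_ft addn0 sum_ff_tau addnC.
by congr addn; apply: eq_bigl => s; rewrite od_true.
Qed.

Lemma onesA_rec n : ones one_decreasing n.+2 + HH n =
  ones one_decreasing n.+1 + cnt one_decreasing n.+1 + ones one_decreasing n.
Proof.
have E1 : (\sum_(s <- words n.+1 | one_decreasing (true :: s)) count_mem true (true :: s)
   = ones one_decreasing n.+1 + cnt one_decreasing n.+1)%N.
  rewrite /ones /cnt -big_split; apply: eq_big => s; first by rewrite od_true.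
  by move=> _ /=; rewrite addnC.
have E2 : (\sum_(s <- words n.+1 | one_decreasing (false :: s)) count_mem true (false :: s)
   + HH n = ones one_decreasing n)%N.
  rewrite sum_words_S sum0_ft addn0.
  rewrite (eq_bigr (fun s => count_mem true s)) // sum_ff_tau /HH -big_split /=.
  by apply: eq_bigr => s Hs; rewrite ones_tau.
rewrite {1}/ones sum_words_S E1 -E2; lia.
Qed.

Lemma HH_rec n : HH n.+2 = HH n + cnt one_decreasing n.
Proof.
rewrite /HH sum_words_S [X in X + _]big1; last by move=> s _.
rewrite add0n sum_words_S [X in X + _]big1; last by move=> s _.
rewrite add0n /cnt -big_split; apply: eq_big => s; first by rewrite !od_true.
by move=> _ /=; rewrite addn1.
Qed.

Lemma cntB_rec n : cnt no11 n.+2 = cnt no11 n.+1 + cnt no11 n.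
Proof.
rewrite /cnt sum_words_S [X in _ + X]sum_words_S.
rewrite [X in _ + (_ + X)]big_pred0; last by move=> s; rewrite no11_tt.
rewrite addn0; congr addn; apply: eq_bigl => s; by rewrite ?no11_f ?no11_tf.
Qed.

Lemma onesB_rec n : ones no11 n.+2 = ones no11 n.+1 + (ones no11 n + cnt no11 n).
Proof.
rewrite /ones sum_words_S [X in _ + X]sum_words_S.
rewrite [X in _ + (_ + X)]big_pred0; last by move=> s; rewrite no11_tt.
rewrite addn0; congr addn.
rewrite /cnt -big_split /=; apply: eq_big => s; rewrite ?no11_tf // => _.
by rewrite addnC.
Qed.

Lemma base_vals :
  (cnt one_decreasing 0 = 1 /\ cnt one_decreasing 1 = 2 /\
      ones one_decreasing 0 = 0 /\ ones one_decreasing 1 = 1 /\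
      HH 0 = 0 /\ HH 1 = 0) /\
  (cnt no11 0 = 1 /\ cnt no11 1 = 2 /\ ones no11 0 = 0 /\ ones no11 1 = 1).
Proof. by rewrite /cnt /ones /HH /= !big_cons !big_nil. Qed.

Fixpoint fib n := if n is n1.+1 then (if n1 is n2.+1 then fib n1 + fib n2 else 1) else 0.
Lemma fibSS n : fib n.+2 = fib n.+1 + fib n. Proof. by []. Qed.

Definition QA n := [/\ cnt one_decreasing n = fib n.+2, HH n + 1 = fib n.+1 &
  5 * ones one_decreasing n + 5 = n * (2 * fib n + fib n.+1) + 2 * fib n + 5 * fib n.+1].

Lemma closedA n : QA n.
Proof.
have [[c0 [c1 [o0 [o1 [h0 h1]]]]] _] := base_vals.
suff : QA n /\ QA n.+1 by case.
elim: n => [|n [[Ec0 Eh0 Eo0] [Ec1 Eh1 Eo1]]].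
  by split; split => //=; rewrite ?c0 ?c1 ?o0 ?o1 ?h0 ?h1.
split; first by split.
have Eo := onesA_rec n; have Ec := cntA_rec n; have Eh := HH_rec n.
split.
- by rewrite Ec Ec0 Ec1.
- by rewrite Eh Ec0 !fibSS; lia.
- move: Eo Eo0 Eo1 Eh0; rewrite Ec1 ?fibSS; nia.
Qed.

Definition QB n := cnt no11 n = fib n.+2 /\
  5 * ones no11 n = n * (2 * fib n + fib n.+1) + 2 * fib n.

Lemma closedB n : QB n.
Proof.
have [_ [c0 [c1 [o0 o1]]]] := base_vals.
suff : QB n /\ QB n.+1 by case.
elim: n => [|n [[Ec0 Eo0] [Ec1 Eo1]]].
  by split; split => //=; rewrite ?c0 ?c1 ?o0 ?o1.
split; first by split.
have Eo := onesB_rec n; have Ec := cntB_rec n.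
split.
- by rewrite Ec Ec0 Ec1.
- move: Eo Eo0 Eo1; rewrite ?Ec0 ?fibSS; nia.
Qed.
End Comb.
Import Comb.

Import Order.TTheory GRing.Theory Num.Theory.
Local Open Scope ring_scope.
Import numFieldNormedType.Exports.
Local Open Scope classical_set_scope.

Lemma cvg_bound (R : realType) (u : nat -> R) (l th : R) : 0 <= th < 1 ->
  (forall n, (0 < n)%N -> `|u n - l| <= th ^+ n + 4 * harmonic n) ->
  u @ \oo --> l.
Proof.
move=> /andP [th0 th1] H.
pose w := fun n : nat => th ^+ n + 4 * harmonic n.
have hw : w @ \oo --> 0.
  rewrite -[0](addr0) -{2}(mulr0 4).
  apply: (@cvgD _ _ _ _ _ (fun n => th ^+ n) (fun n => 4 * harmonic n)).
    by apply: cvg_expr; rewrite ger0_norm.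
  apply: cvgMl_tmp; exact: cvg_harmonic.
apply: (@squeeze_cvgr _ _ _ _ (fun n => l - w n) (fun n => l + w n)).
- near=> n.
  have hn : (0 < n)%N by near: n; exact: nbhs_infty_gt.
  have := H n hn; rewrite ler_norml -/(w n) => /andP [h1 h2].
  apply/andP; split; lra.
- rewrite -{2}[l]subr0; apply: cvgB => //; exact: cvg_cst.
- rewrite -{2}[l]addr0; apply: cvgD => //; exact: cvg_cst.
Unshelve. all: by end_near.
Qed.
Lemma key (R : realType) (th x y o d e : R) (n : nat) : (0 < n)%N -> 0 <= th ->
  1 <= y -> 0 <= x -> `|d| <= th ^+ n -> 0 <= e <= 5 * y ->
  d = y - th * (x + y) -> 5 * o = n%:R * (2 * x + y) + 2 * x + e ->
  `|o / (n%:R * (x + y)) - (2 - th) / 5| <= th ^+ n + 4 * harmonic n.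
Proof.
move=> hn th0 hy hx hd /andP [he1 he2] Ed Eo.
have hm : 1 <= n%:R :> R by rewrite ler1n.
move: hm hd; set m := n%:R; set t := th ^+ n => hm hd.
have ht : 0 <= t by rewrite exprn_ge0.
have hc : 0 < x + y by lra.
have E : o / (m * (x + y)) - (2 - th) / 5 = (- (m * d) + 2 * x + e) / (5 * (m * (x + y))).
  have -> : o = (5 * o) / 5 by field.
  rewrite Eo Ed; field; apply/andP; split; apply/negP => /eqP; lra.
have H2 : 2 / m <= 4 * harmonic n.
  rewrite /= -[n.+1]addn1 natrD -/m ler_pdivrMr; last lra.
  rewrite mulrAC ler_pdivlMr; lra.
apply: (le_trans _ (lerD (lexx t) H2)).
rewrite E normrM normfV (gtr0_norm (_ : 0 < 5 * (m * (x + y)))); last first.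
  by apply: mulr_gt0; [lra | apply: mulr_gt0; lra].
rewrite ler_pdivrMr; last by apply: mulr_gt0; [lra | apply: mulr_gt0; lra].
have -> : (t + 2 / m) * (5 * (m * (x + y))) = 5 * (t * m) * (x + y) + 10 * (x + y).
  by field; apply/negP => /eqP; lra.
move: hd; rewrite !ler_norml => /andP [d1 d2].
have hmd1 : - (m * t) <= m * d by nra.
have hmd2 : m * d <= m * t by nra.
have hz : m * t <= 5 * (t * m) * (x + y) by nra.
apply/andP; split; nra.
Qed.
Lemma golden_facts (R : realType) :
  [/\ 0 <= golden R - 1, golden R - 1 < 1, (golden R - 1) ^+ 2 = 1 - (golden R - 1) &
   (2 - golden R) / (3 - golden R) = (2 - (golden R - 1)) / 5].
Proof.
have hs2 : Num.sqrt 5 ^+ 2 = 5 :> R by rewrite sqr_sqrtr.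
have hs0 : 0 <= Num.sqrt 5 :> R by apply: sqrtr_ge0.
have hs : (2 < Num.sqrt 5 :> R) && (Num.sqrt 5 < 3 :> R) by rewrite expr2 in hs2; apply/andP; split; nra.
case/andP: hs => hs1 hs3.
rewrite /golden; split.
- lra.
- lra.
- rewrite expr2 in hs2 *; nra.
- apply/eqP; rewrite eqr_div; [| apply/negP => /eqP; lra | apply/negP => /eqP; lra].
  apply/eqP; rewrite expr2 in hs2; nra.
Qed.

Lemma dform (R : realType) (th : R) n : th ^+ 2 = 1 - th ->
  (fib n.+1)%:R - th * ((fib n)%:R + (fib n.+1)%:R) = (- th) ^+ n * (1 - th).
Proof.
move=> Hth; elim: n => [|n IH]; first by rewrite /= expr0 mul1r add0r mulr1.
rewrite exprS -mulrA -IH fibSS natrD.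
apply/eqP; rewrite -subr_eq0; apply/eqP.
have -> : forall a b : R, a + b - th * (a + (a + b)) - - th * (a - th * (b + a)) =
    ((1 - th) - th ^+ 2) * (a + b) by move=> a b; ring.
by rewrite Hth subrr mul0r.
Qed.

Lemma freq_eq (R : realType) P n :
  ones_freq R P n = (ones P n)%:R / (n * cnt P n)%:R.
Proof.
rewrite /ones_freq !sum_tuple /cnt /ones big_distrr /=.
by congr (_ / _%:R); apply: eq_bigr => s _; rewrite muln1.
Qed.

Lemma fib_pos n : (0 < fib n.+1)%N.
Proof. by elim: n => // n IH; rewrite fibSS ltn_addr. Qed.

Theorem corollary4 (R : realType) :
  (ones_freq R one_decreasing @ \oo -->
     (2 - golden R) / (3 - golden R)) /\
  (ones_freq R no11 @ \oo -->
     (2 - golden R) / (3 - golden R)).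
Proof.
have [th0 th1 Hth ->] := golden_facts R.
move: th0 th1 Hth; set th := golden R - 1 => th0 th1 Hth.
have Hd : forall n, `|(fib n.+1)%:R - th * ((fib n)%:R + (fib n.+1)%:R)| <= th ^+ n :> R.
  move=> n; rewrite dform // normrM normrX normrN (ger0_norm th0) (ger0_norm (_ : 0 <= 1 - th)); last lra.
  rewrite -{2}[th ^+ n]mulr1 ler_wpM2l ?exprn_ge0 //; lra.
have Hc : forall n, (n * fib n.+2)%:R = n%:R * ((fib n)%:R + (fib n.+1)%:R) :> R.
  by move=> n; rewrite fibSS natrM natrD addrC.
have Hy : forall n, 1 <= (fib n.+1)%:R :> R by move=> n; rewrite ler1n fib_pos.
have Hth01 : 0 <= th < 1 by rewrite th0 th1.
split.
- apply: (@cvg_bound R _ _ th Hth01) => n hn; rewrite freq_eq.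
  have [Ec _ Eo] := closedA n.
  rewrite Ec Hc.
  have := Hy n => hy.
  apply: (@key R th _ _ _ ((fib n.+1)%:R - th * ((fib n)%:R + (fib n.+1)%:R))
              (5 * (fib n.+1)%:R - 5) n hn) => //.
  + by apply/andP; split; lra.
  + have := congr1 (fun k => k%:R : R) Eo; rewrite /= !natrD !natrM => E; lra.
- apply: (@cvg_bound R _ _ th Hth01) => n hn; rewrite freq_eq.
  have [Ec Eo] := closedB n.
  rewrite Ec Hc.
  have := Hy n => hy.
  apply: (@key R th _ _ _ ((fib n.+1)%:R - th * ((fib n)%:R + (fib n.+1)%:R))
              0 n hn) => //.
  + by apply/andP; split; lra.
  + have := congr1 (fun k => k%:R : R) Eo; rewrite /= !natrD !natrM => E; lra.
Qed.
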